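(* If $\nu>-1$ and $a,b\in[0,j_{\nu+1,1}]$, then $$|\mathcal{J}_\nu(a)-\mathcal{J}_\nu(b)|\ge |a-b|\sqrt{\mathcal{J}_\nu'(a)\,\mathcal{J}_\nu'(b)}.$$
   Context: For $\nu>-1$ define $\mathcal{J}_\nu:\mathbb{R}\to(-\infty,1]$ by $\mathcal{J}_\nu(x)=\sum_{n\ge0}\frac{(-1/4)^n}{(\nu+1)_n\, n!}x^{2n}$, equivalently $\mathcal{J}_\nu(x)=2^\nu\Gamma(\nu+1)x^{-\nu}J_\nu(x)$ for $x>0$, where $J_\nu$ is the Bessel function of the first kind and $(a)_n$ is the Pochhammer symbol. $j_{\mu,1}$ denotes the first positive zero of $J_\mu$. *)

(* Defs.v *)
From Stdlib Require Import Reals Lra ClassicalEpsilon Factorial.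
Open Scope R_scope.

Fixpoint poch (a : R) (n : nat) : R :=
  match n with
  | O => 1
  | S k => poch a k * (a + INR k)
  end.

Definition calJ_coef (nu : R) (n : nat) : R :=
  (-1/4) ^ n / (poch (nu + 1) n * INR (Factorial.fact n)).

(* calJ_nu(x) = sum_{n>=0} (-1/4)^n / ((nu+1)_n n!) x^(2n),
   i.e. the value of the power series sum calJ_coef nu n * (x^2)^n
   (which converges for every real x when nu > -1). *)
Definition calJ (nu x : R) : R :=
  epsilon (inhabits 0) (fun l => Pser (calJ_coef nu) (x ^ 2) l).

Definition first_pos_zero (f : R -> R) (j : R) : Prop :=
  0 < j /\ f j = 0 /\ (forall x, 0 < x < j -> f x <> 0).

(* Main.v *)
Require Import Defs.
From Stdlib Require Import Reals Lra Lia Psatz ClassicalEpsilon Factorial.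
From Coquelicot Require Import Coquelicot.
Open Scope R_scope.

Lemma poch_pos a n : 0 < a -> 0 < poch a n.
Proof.
  intro Ha; induction n as [|n IH]; simpl; [lra|].
  apply Rmult_lt_0_compat; auto. pose proof (pos_INR n); lra.
Qed.

Lemma poch_shift a n : poch a (S n) = a * poch (a + 1) n.
Proof.
  induction n as [|n IH]; [simpl; ring|].
  change (poch a (S (S n))) with (poch a (S n) * (a + INR (S n))).
  rewrite IH. simpl. destruct n; simpl; ring.
Qed.

Lemma fact_pos n : 0 < INR (fact n).
Proof. apply lt_0_INR. apply lt_O_fact. Qed.

Lemma coef_rec nu n : -1 < nu ->
  calJ_coef nu (S n) = calJ_coef nu n * (-1/4) / ((nu + 1 + INR n) * (INR n + 1)).
Proof.
  intro Hnu. unfold calJ_coef.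
  pose proof (poch_pos (nu+1) n ltac:(lra)). pose proof (fact_pos n).
  pose proof (pos_INR n).
  change (poch (nu+1) (S n)) with (poch (nu+1) n * (nu + 1 + INR n)).
  change (fact (S n)) with (S n * fact n)%nat. rewrite mult_INR, S_INR.
  simpl pow. field. repeat split; lra.
Qed.

Lemma coef_nz nu n : -1 < nu -> calJ_coef nu n <> 0.
Proof.
  intro Hnu. unfold calJ_coef.
  pose proof (poch_pos (nu+1) n ltac:(lra)). pose proof (fact_pos n).
  apply Rmult_integral_contrapositive_currified.
  - apply pow_nonzero; lra.
  - apply Rinv_neq_0_compat. apply Rmult_integral_contrapositive_currified; lra.
Qed.

Definition ent (a : nat -> R) := CV_radius a = p_infty.

Lemma coef_ent nu : -1 < nu -> ent (calJ_coef nu).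
Proof.
  intro Hnu. apply CV_radius_infinite_DAlembert.
  - intro n; apply coef_nz; auto.
  - apply is_lim_seq_le_le with (u := fun _ => 0)
      (w := fun n => / (4 * (nu+1)) * / (INR n + 1)).
    + intro n. rewrite coef_rec by auto.
      pose proof (coef_nz nu n Hnu). pose proof (pos_INR n).
      replace (calJ_coef nu n * (-1 / 4) / ((nu + 1 + INR n) * (INR n + 1)) /
               calJ_coef nu n) with (- (/ (4 * (nu + 1 + INR n) * (INR n + 1))))
        by (field; repeat split; lra).
      rewrite Rabs_Ropp. rewrite Rabs_pos_eq.
      2: { left; apply Rinv_0_lt_compat. apply Rmult_lt_0_compat; lra. }
      split. { left; apply Rinv_0_lt_compat. apply Rmult_lt_0_compat; lra. }
      rewrite <- Rinv_mult.
      apply Rinv_le_contravar. apply Rmult_lt_0_compat; lra.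
      apply Rmult_le_compat_r; lra.
    + apply is_lim_seq_const.
    + replace (Finite 0) with (Rbar_mult (/ (4 * (nu+1))) 0) by (simpl; f_equal; ring).
      apply is_lim_seq_scal_l.
      replace (Finite 0) with (Rbar_inv p_infty) by reflexivity.
      apply is_lim_seq_inv; [|discriminate].
      eapply (is_lim_seq_plus _ _ p_infty 1 p_infty). apply is_lim_seq_INR. apply is_lim_seq_const.
      reflexivity.
Qed.

Definition E (a : nat -> R) (x : R) := PSeries a (x ^ 2).

Lemma ent_ex a y : ent a -> ex_pseries a y.
Proof. intro H. apply CV_radius_inside. rewrite H. exact I. Qed.

Lemma calJ_E nu x : -1 < nu -> calJ nu x = E (calJ_coef nu) x.
Proof.
  intro Hnu. unfold calJ, E.
  destruct (ent_ex (calJ_coef nu) (x^2) (coef_ent nu Hnu)) as [l Hl].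
  assert (Hp : Pser (calJ_coef nu) (x ^ 2) l) by (apply is_pseries_Reals; exact Hl).
  pose proof (epsilon_spec (inhabits 0) (fun l => Pser (calJ_coef nu) (x ^ 2) l)
     (ex_intro _ l Hp)) as Hs.
  symmetry. apply is_pseries_unique. apply is_pseries_Reals. exact Hs.
Qed.

Definition dc (a : nat -> R) : nat -> R := fun n => 2 * (INR (S n) * a (S n)).

Lemma ent_dc a : ent a -> ent (dc a).
Proof.
  unfold ent; intro H.
  replace (dc a) with (PS_scal 2 (PS_derive a)) by reflexivity.
  rewrite CV_radius_scal by lra. rewrite CV_radius_derive. auto.
Qed.

Lemma E_derive a x : ent a -> is_derive (E a) x (x * E (dc a) x).
Proof.
  intro H. unfold E.
  replace (dc a) with (PS_scal 2 (PS_derive a)) by reflexivity.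
  rewrite PSeries_scal.
  assert (H1 : is_derive (PSeries a) (x^2) (PSeries (PS_derive a) (x^2))).
  { apply is_derive_PSeries. rewrite H. exact I. }
  assert (H2 : is_derive (fun t : R => t ^ 2) x (2 * x)).
  { pose proof (is_derive_pow (fun t => t) 2 x 1 (is_derive_id x)) as Hp.
    simpl in Hp. replace (2 * x) with ((1 + 1) * 1 * (x * 1)) by ring. exact Hp. }
  pose proof (is_derive_comp _ _ x _ _ H1 H2) as Hc.
  assert (Heq : scal (2*x) (PSeries (PS_derive a) (x^2)) = x * (2 * PSeries (PS_derive a) (x^2)))
    by (unfold scal; simpl; unfold mult; simpl; ring).
  rewrite <- Heq. exact Hc.
Qed.


Lemma dc_shift nu n : -1 < nu ->
  dc (calJ_coef nu) n = - / (2 * (nu + 1)) * calJ_coef (nu + 1) n.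
Proof.
  intro Hnu. unfold dc, calJ_coef. rewrite poch_shift.
  pose proof (poch_pos (nu+1+1) n ltac:(lra)). pose proof (fact_pos n).
  pose proof (pos_INR n).
  change (fact (S n)) with (S n * fact n)%nat. rewrite mult_INR, S_INR.
  simpl pow. field. repeat split; lra.
Qed.

Lemma E_dc_shift nu x : -1 < nu ->
  E (dc (calJ_coef nu)) x = - / (2 * (nu + 1)) * E (calJ_coef (nu + 1)) x.
Proof.
  intro Hnu. unfold E. rewrite <- PSeries_scal. apply PSeries_ext.
  intro n. rewrite dc_shift by auto. reflexivity.
Qed.

Lemma ode_coef mu n : -1 < mu ->
  calJ_coef mu n + (2 * mu + 2) * dc (calJ_coef mu) n
  + PS_incr_1 (dc (dc (calJ_coef mu))) n = 0.
Proof.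
  intro Hmu. destruct n as [|m].
  - simpl PS_incr_1. unfold dc. rewrite coef_rec by auto.
    unfold calJ_coef at 1 2. simpl. unfold zero; simpl. field. lra.
  - simpl PS_incr_1. unfold dc.
    rewrite (coef_rec mu (S m)) by auto.
    pose proof (pos_INR m). rewrite !S_INR.
    field. split; lra.
Qed.

Lemma ode_E mu x : -1 < mu ->
  E (calJ_coef mu) x + (2 * mu + 2) * E (dc (calJ_coef mu)) x
  + x ^ 2 * E (dc (dc (calJ_coef mu))) x = 0.
Proof.
  intro Hmu. set (c := calJ_coef mu).
  assert (Hc : ent c) by (apply coef_ent; auto).
  assert (Hd : ent (dc c)) by (apply ent_dc; auto).
  assert (Hdd : ent (dc (dc c))) by (apply ent_dc; auto).
  unfold E. rewrite <- PSeries_incr_1.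
  rewrite <- (PSeries_scal (2 * mu + 2)).
  rewrite <- PSeries_plus.
  2: apply ent_ex; auto.
  2: { apply ex_pseries_scal. apply Rmult_comm. apply ent_ex; auto. }
  rewrite <- PSeries_plus.
  2: { apply ex_pseries_plus. apply ent_ex; auto.
       apply ex_pseries_scal. apply Rmult_comm. apply ent_ex; auto. }
  2: { apply ex_pseries_incr_1. apply ent_ex; auto. }
  rewrite <- (PSeries_const_0 (x ^ 2)). apply PSeries_ext. intro n.
  unfold PS_plus, PS_scal, plus, scal; simpl. unfold mult; simpl.
  apply ode_coef; auto.
Qed.


Lemma D_mult (f g : R -> R) x df dg : is_derive f x df -> is_derive g x dg ->
  is_derive (fun t => f t * g t) x (df * g x + f x * dg).
Proof. intros H1 H2. apply (is_derive_mult f g x df dg H1 H2). intros; apply Rmult_comm. Qed.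
Lemma D_plus (f g : R -> R) x df dg : is_derive f x df -> is_derive g x dg ->
  is_derive (fun t => f t + g t) x (df + dg).
Proof. intros H1 H2. apply (is_derive_plus f g x df dg H1 H2). Qed.
Lemma D_minus (f g : R -> R) x df dg : is_derive f x df -> is_derive g x dg ->
  is_derive (fun t => f t - g t) x (df - dg).
Proof. intros H1 H2. apply (is_derive_minus f g x df dg H1 H2). Qed.
Lemma D_id x : is_derive (fun t : R => t) x 1.
Proof. apply (is_derive_id x). Qed.
Lemma D_const (c : R) x : is_derive (fun _ : R => c) x 0.
Proof. apply (is_derive_const c x). Qed.
Lemma D_refl (f : R -> R) x k df : is_derive f (k - x) df ->
  is_derive (fun t => f (k - t)) x (- df).
Proof.
  intro H. assert (H2 : is_derive (fun t : R => k - t) x (0 - 1)).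
  { apply D_minus. apply D_const. apply D_id. }
  pose proof (is_derive_comp f (fun t => k - t) x df _ H H2) as Hc.
  replace (- df) with (scal (0 - 1) df) by (unfold scal; simpl; unfold mult; simpl; ring).
  exact Hc.
Qed.
Lemma D_ext (f : R -> R) (x l l' : R) : @eq R l l' -> is_derive f x l -> is_derive f x l'.
Proof. intros ->; auto. Qed.

Lemma D_cont (f : R -> R) x l : is_derive f x l -> continuity_pt f x.
Proof. intro H. apply derivable_continuous_pt. exists l. apply is_derive_Reals. auto. Qed.

Lemma incr (f df : R -> R) a b : a <= b ->
  (forall x, a <= x <= b -> is_derive f x (df x)) ->
  (forall x, a <= x <= b -> 0 <= df x) -> f a <= f b.
Proof.
  intros Hab Hd Hp.
  destruct (MVT_gen f a b df) as [c [Hc Heq]]; cbv zeta in *;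
    rewrite ?Rmin_left, ?Rmax_right in * by lra.
  - intros; apply Hd; lra.
  - intros; eapply D_cont; apply Hd; lra.
  - pose proof (Hp c Hc). nra.
Qed.

Lemma min_contra (f : R -> R) c l a : is_derive f c l -> 0 < l -> a < c ->
  exists y, a <= y < c /\ f y < f c.
Proof.
  intros H Hl Ha. apply is_derive_Reals in H.
  destruct (H (l/2) ltac:(lra)) as [d Hd].
  set (h := - Rmin (d/2) ((c-a)/2)).
  assert (Hm1 : Rmin (d/2) ((c-a)/2) <= d/2) by apply Rmin_l.
  assert (Hm2 : Rmin (d/2) ((c-a)/2) <= (c-a)/2) by apply Rmin_r.
  assert (Hm3 : 0 < Rmin (d/2) ((c-a)/2)).
  { apply Rmin_glb_lt; pose proof (cond_pos d); lra. }
  assert (Hh : h < 0) by (unfold h; lra).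
  specialize (Hd h ltac:(lra)).
  assert (Habs : Rabs h < d) by (rewrite Rabs_left by lra; unfold h; pose proof (cond_pos d); lra).
  specialize (Hd Habs).
  apply Rabs_def2 in Hd. destruct Hd as [Hd1 Hd2].
  set (q := (f (c + h) - f c) / h) in *.
  assert (Hq : f (c + h) - f c = q * h) by (unfold q; field; lra).
  exists (c + h). split. unfold h; lra. nra.
Qed.

Section Main.
Variables (mu j : R) (P g h G : R -> R).
Hypothesis Hmu : 0 < mu.
Hypothesis Hj : 0 < j.
Hypothesis HP : forall x, is_derive P x (x * g x).
Hypothesis Hg : forall x, is_derive g x (x * h x).
Hypothesis Hode : forall x, P x + (2*mu+2) * g x + x^2 * h x = 0.
Hypothesis HP0 : P 0 = 1.
Hypothesis HPnz : forall x, 0 < x < j -> P x <> 0.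
Hypothesis HPj : P j = 0.
Hypothesis HG : forall x, is_derive G x (x * P x).

Definition N x := P x * P x + (2*mu+2) * P x * g x + (x * x) * (g x * g x).

Lemma dN x : is_derive N x (2 * P x * (x * g x) + (2*mu+2) * (x * g x * g x + P x * (x * h x))
   + 2 * x * g x ^ 2 + x^2 * (2 * g x * (x * h x))).
Proof.
  unfold N.
  assert (d1 := D_mult P P x _ _ (HP x) (HP x)).
  assert (d2 := D_mult (fun t => (2*mu+2) * P t) g x _ _
     (D_mult (fun _ => 2*mu+2) P x _ _ (D_const _ x) (HP x)) (Hg x)).
  assert (d3 := D_mult (fun t => t * t) (fun t => g t * g t) x _ _
     (D_mult (fun t => t) (fun t => t) x _ _ (D_id x) (D_id x))
     (D_mult g g x _ _ (Hg x) (Hg x))).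
  assert (d := D_plus _ _ x _ _ (D_plus _ _ x _ _ d1 d2) d3).
  simpl in d. eapply D_ext; [|exact d]. ring.
Qed.

Lemma N0 : N 0 = 0.
Proof.
  unfold N. pose proof (Hode 0) as H. rewrite HP0 in *.
  replace (0 ^ 2 * h 0) with 0 in H by ring.
  replace (1 * 1 + (2 * mu + 2) * 1 * g 0 + 0 * 0 * (g 0 * g 0)) with (1 + (2*mu+2) * g 0) by ring.
  lra.
Qed.

Lemma N_nonneg x : 0 <= x -> 0 <= N x.
Proof.
  intro Hx. destruct (Rle_or_lt 0 (N x)) as [|Hn]; auto. exfalso.
  assert (Hx0 : 0 < x). { destruct Hx as [|<-]; auto. rewrite N0 in Hn; lra. }
  destruct (continuity_ab_min N 0 x ltac:(lra)) as [m [Hm1 Hm2]].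
  { intros; eapply D_cont; apply dN. }
  assert (Hnm : N m < 0) by (pose proof (Hm1 x ltac:(lra)); lra).
  assert (Hm0 : 0 < m). { destruct Hm2 as [[|<-] _]; auto. rewrite N0 in Hnm; lra. }
  set (d := 2 * P m * (m * g m) + (2*mu+2) * (m * g m * g m + P m * (m * h m))
   + 2 * m * g m ^ 2 + m^2 * (2 * g m * (m * h m))).
  assert (Hid : m * d = - (2*mu+2) * N m + 2 * m^2 * g m ^ 2
     + (((2*mu+2) * P m + 2 * m^2 * g m) * (P m + (2*mu+2) * g m + m^2 * h m))).
  { unfold d, N. ring. }
  rewrite Hode in Hid.
  assert (Hd : 0 < d).
  { assert (0 < m * d). { rewrite Hid. nra. } nra. }
  destruct (min_contra N m d 0 (dN m) Hd Hm0) as [y [Hy1 Hy2]].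
  pose proof (Hm1 y ltac:(lra)). lra.
Qed.

Lemma P_pos x : 0 <= x < j -> 0 < P x.
Proof.
  intro Hx. destruct (Rlt_or_le 0 (P x)) as [|Hle]; auto. exfalso.
  assert (Hx0 : 0 < x). { destruct (Req_dec x 0) as [->|]; [rewrite HP0 in Hle; lra|lra]. }
  destruct (IVT_gen P 0 x 0) as [z [Hz1 Hz2]].
  { intro t. apply continuity_pt_filterlim. apply continuity_pt_filterlim.
    eapply D_cont; apply HP. }
  { rewrite HP0, Rmin_right, Rmax_left by lra. lra. }
  rewrite Rmin_left, Rmax_right in Hz1 by lra.
  destruct (Req_dec z 0) as [->|Hz0]. rewrite HP0 in Hz2; lra.
  apply (HPnz z); [lra|auto].
Qed.

Definition psi x := x * P x.
Definition psi1 x := P x + x^2 * g x.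
Definition psi2 x := 3 * x * g x + x^3 * h x.

Lemma dpsi x : is_derive psi x (psi1 x).
Proof.
  unfold psi, psi1. eapply D_ext; [|apply (D_mult (fun t => t) P); [apply D_id|apply HP]].
  simpl; ring.
Qed.

Lemma dpsi1 x : is_derive psi1 x (psi2 x).
Proof.
  unfold psi1, psi2.
  assert (d := D_plus _ _ x _ _ (HP x) (D_mult (fun t => t * t) g x _ _
     (D_mult (fun t => t) (fun t => t) x _ _ (D_id x) (D_id x)) (Hg x))).
  simpl in d. eapply D_ext; [|eapply is_derive_ext; [|exact d]].
  simpl; ring. intro t; simpl; ring.
Qed.

Lemma logconc x : 0 <= x -> psi x * psi2 x - psi1 x ^ 2 <= 0.
Proof.
  intro Hx. pose proof (N_nonneg x Hx) as HN. unfold N in HN.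
  pose proof (Hode x) as Ho.
  unfold psi, psi1, psi2.
  assert (Hid : x * P x * (3 * x * g x + x ^ 3 * h x) - (P x + x ^ 2 * g x) ^ 2
    = -(x^2 * P x ^ 2 + (2*mu+1) * x^2 * P x * g x + P x ^ 2 + x^4 * g x ^ 2)
      + x^2 * P x * (P x + (2 * mu + 2) * g x + x ^ 2 * h x)) by ring.
  rewrite Hid, Ho.
  set (p := P x) in *. set (q := g x) in *.
  destruct (Rle_or_lt 0 (p * q)).
  - assert (0 <= x^2 * (p * q)) by (apply Rmult_le_pos; nra).
    nra.
  - assert (0 <= x^2 * (p * p + (2 * mu + 2) * p * q + x * x * (q * q))) by (apply Rmult_le_pos; nra).
    assert (0 <= x^2 * (- (p * q))) by (apply Rmult_le_pos; nra).
    nra.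
Qed.

Definition r x := psi1 x / psi x.

Lemma psi_pos x : 0 < x < j -> 0 < psi x.
Proof. intro; unfold psi; apply Rmult_lt_0_compat; [lra|apply P_pos; lra]. Qed.

Lemma r_decr t s : 0 < t -> t <= s -> s < j -> r s <= r t.
Proof.
  intros H1 H2 H3.
  assert (Hd : forall x, t <= x <= s -> is_derive (fun y => - r y) x
    (- ((psi2 x * psi x - psi1 x * psi1 x) / psi x ^ 2))).
  { intros x Hx. apply (is_derive_opp r). apply is_derive_div.
    apply dpsi1. apply dpsi. pose proof (psi_pos x); lra. }
  pose proof (incr (fun y => - r y) _ t s H2 Hd) as Hi.
  cut (- r t <= - r s). lra. apply Hi.
  intros x Hx. pose proof (psi_pos x ltac:(lra)). pose proof (logconc x ltac:(lra)).
  assert (0 < psi x ^ 2) by (apply pow_lt; lra).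
  apply Ropp_0_ge_le_contravar. unfold Rdiv.
  apply Rle_ge. rewrite <- (Rmult_0_l (/ psi x ^ 2)). apply Rmult_le_compat_r.
  left; apply Rinv_0_lt_compat; auto. simpl in *. nra.
Qed.

Lemma core a b : 0 < a -> a < b -> b < j ->
  G b - G a >= (b - a) * sqrt (a * P a * (b * P b)).
Proof.
  intros Ha Hab Hb.
  set (Sg := sqrt (psi a * psi b)).
  assert (HS0 : 0 <= Sg) by apply sqrt_pos.
  assert (HSS : Sg * Sg = psi a * psi b).
  { apply sqrt_sqrt. pose proof (psi_pos a); pose proof (psi_pos b); nra. }
  set (Q := fun t => psi t * psi (a + b - t)).
  assert (HQ : forall t, a <= t <= (a+b)/2 -> Q a <= Q t).
  { intros t Ht. apply (incr Q (fun t => psi1 t * psi (a+b-t) + psi t * (- psi1 (a+b-t))) a t).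
    lra.
    intros x Hx. unfold Q. cbv beta.
    apply (D_mult psi (fun t => psi (a + b - t))). apply dpsi.
    apply (D_refl psi x (a+b)). apply dpsi.
    intros x Hx.
    pose proof (psi_pos x ltac:(lra)). pose proof (psi_pos (a+b-x) ltac:(lra)).
    pose proof (r_decr x (a+b-x) ltac:(lra) ltac:(lra) ltac:(lra)).
    unfold r in *.
    assert (E1 : psi1 x = (psi1 x / psi x) * psi x) by (field; lra).
    assert (E2 : psi1 (a+b-x) = (psi1 (a+b-x) / psi (a+b-x)) * psi (a+b-x)) by (field; lra).
    rewrite E1, E2.
    set (u := psi1 x / psi x) in *. set (v := psi1 (a+b-x) / psi (a+b-x)) in *.
    replace (u * psi x * psi (a + b - x) + psi x * - (v * psi (a + b - x)))
      with ((psi x * psi (a+b-x)) * (u - v)) by ring.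
    apply Rmult_le_pos; nra. }
  assert (HQa : Q a = psi a * psi b) by (unfold Q; f_equal; f_equal; ring).
  assert (Hsum : forall t, a <= t <= b -> 2 * Sg <= psi t + psi (a+b-t)).
  { intros t Ht.
    assert (Hprod : psi a * psi b <= psi t * psi (a+b-t)).
    { destruct (Rle_or_lt t ((a+b)/2)).
      - rewrite <- HQa. apply HQ; lra.
      - rewrite <- HQa. replace (psi t * psi (a+b-t)) with (Q (a+b-t)).
        apply HQ; lra. unfold Q. replace (a+b-(a+b-t)) with t by ring. ring. }
    pose proof (psi_pos t ltac:(lra)). pose proof (psi_pos (a+b-t) ltac:(lra)).
    set (u := psi t) in *. set (v := psi (a+b-t)) in *. clearbody Sg u v.
    destruct (Rle_or_lt (2*Sg) (u+v)) as [|Hlt]; auto. exfalso.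
    assert ((u+v)*(u+v) < (2*Sg)*(2*Sg)) by (apply Rmult_le_0_lt_compat; lra).
    rewrite <- HSS in Hprod. clear - Hprod H H0 Hlt H1 HS0.
    assert (0 <= (u-v)*(u-v)) by apply Rle_0_sqr.
    assert ((u+v)*(u+v) = (u-v)*(u-v) + 4*(u*v)) by ring.
    assert (2*Sg*(2*Sg) = 4*(Sg*Sg)) by ring. lra. }
  set (H := fun t => G t - G (a+b-t) - 2 * Sg * t).
  assert (HH : H a <= H b).
  { apply (incr H (fun t => t * P t - - ((a+b-t) * P (a+b-t)) - 2 * Sg * 1)). lra.
    intros x Hx. unfold H. apply D_minus. apply D_minus. apply HG.
    apply (D_refl G x (a+b)). apply HG.
    eapply D_ext; [|exact (D_mult (fun _ => 2*Sg) (fun t => t) x _ _ (D_const _ x) (D_id x))].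
    simpl; ring.
    intros x Hx. pose proof (Hsum x Hx). unfold psi in *. lra. }
  unfold H in HH. replace (a+b-a) with b in HH by ring. replace (a+b-b) with a in HH by ring.
  fold (psi a) (psi b). fold Sg. nra.
Qed.

Lemma Pnn x : 0 <= x <= j -> 0 <= P x.
Proof.
  intro Hx. destruct (Req_dec x j) as [->|]. rewrite HPj; lra.
  left; apply P_pos; lra.
Qed.

Lemma final_le a b : 0 <= a <= b -> b <= j ->
  Rabs (G a - G b) >= (b - a) * sqrt (a * P a * (b * P b)).
Proof.
  intros Ha Hb.
  destruct (Req_dec a 0) as [->|Ha0].
  { replace (0 * P 0 * (b * P b)) with 0 by ring. rewrite sqrt_0, Rmult_0_r. apply Rle_ge, Rabs_pos. }
  destruct (Req_dec b j) as [->|Hbj].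
  { rewrite HPj. replace (a * P a * (j * 0)) with 0 by ring. rewrite sqrt_0, Rmult_0_r. apply Rle_ge, Rabs_pos. }
  destruct (Req_dec a b) as [->|Hab].
  { replace (b - b) with 0 by ring. rewrite Rmult_0_l. apply Rle_ge, Rabs_pos. }
  pose proof (core a b ltac:(lra) ltac:(lra) ltac:(lra)).
  rewrite Rabs_minus_sym. pose proof (Rle_abs (G b - G a)). lra.
Qed.
End Main.


Theorem corollary2 (nu j a b da db : R) :
  -1 < nu ->
  first_pos_zero (calJ (nu + 1)) j ->
  0 <= a <= j -> 0 <= b <= j ->
  derivable_pt_lim (calJ nu) a da ->
  derivable_pt_lim (calJ nu) b db ->
  Rabs (calJ nu a - calJ nu b) >= Rabs (a - b) * sqrt (da * db).
Proof.
  intros Hnu [Hj [HPj HPnz]] Ha Hb Hda Hdb.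
  set (mu := nu + 1) in *.
  assert (Hmu : 0 < mu) by (unfold mu; lra).
  set (c := calJ_coef mu).
  set (P := E c). set (g := E (dc c)). set (h := E (dc (dc c))).
  assert (Hc : ent c) by (apply coef_ent; lra).
  assert (HP : forall x, is_derive P x (x * g x)) by (intro; apply E_derive; auto).
  assert (Hg : forall x, is_derive g x (x * h x)) by (intro; apply E_derive; apply ent_dc; auto).
  assert (Hode : forall x, P x + (2*mu+2) * g x + x^2 * h x = 0) by (intro; apply ode_E; lra).
  assert (HP0 : P 0 = 1).
  { unfold P, E. replace (0 ^ 2) with 0 by ring. rewrite PSeries_0.
    unfold c, calJ_coef. simpl. field. }
  assert (HPeq : forall x, calJ mu x = P x) by (intro; apply calJ_E; lra).
  assert (HPnz' : forall x, 0 < x < j -> P x <> 0) by (intros; rewrite <- HPeq; auto).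
  assert (HPj' : P j = 0) by (rewrite <- HPeq; auto).
  assert (HF : forall x, is_derive (calJ nu) x (x * (- / (2 * mu) * P x))).
  { intro x. eapply is_derive_ext. intro t; symmetry; apply calJ_E; auto.
    eapply D_ext; [|apply E_derive; apply coef_ent; auto].
    rewrite E_dc_shift by auto. reflexivity. }
  set (G := fun x => - (2 * mu) * calJ nu x).
  assert (HG : forall x, is_derive G x (x * P x)).
  { intro x. eapply D_ext; [|apply is_derive_scal; apply HF]. field. lra. }
  assert (Eda : da = a * (- / (2 * mu) * P a)).
  { eapply uniqueness_limite; [exact Hda|]. apply is_derive_Reals, HF. }
  assert (Edb : db = b * (- / (2 * mu) * P b)).
  { eapply uniqueness_limite; [exact Hdb|]. apply is_derive_Reals, HF. }
  assert (HX : 0 <= a * P a * (b * P b)).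
  { pose proof (Pnn j P g HP HP0 HPnz' HPj' a Ha).
    pose proof (Pnn j P g HP HP0 HPnz' HPj' b Hb).
    apply Rmult_le_pos; apply Rmult_le_pos; lra. }
  assert (Esq : sqrt (da * db) = sqrt (a * P a * (b * P b)) * / (2 * mu)).
  { rewrite Eda, Edb.
    replace (a * (- / (2 * mu) * P a) * (b * (- / (2 * mu) * P b)))
      with (a * P a * (b * P b) * (/ (2 * mu)) ^ 2) by (field; lra).
    rewrite sqrt_mult_alt by auto. f_equal. apply sqrt_pow2.
    left; apply Rinv_0_lt_compat; lra. }
  assert (EG : forall x y, Rabs (G x - G y) = 2 * mu * Rabs (calJ nu x - calJ nu y)).
  { intros x y. unfold G.
    replace (- (2 * mu) * calJ nu x - - (2 * mu) * calJ nu y)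
      with (- (2 * mu) * (calJ nu x - calJ nu y)) by ring.
    rewrite Rabs_mult, Rabs_Ropp, Rabs_pos_eq by lra. reflexivity. }
  rewrite Esq.
  assert (Key : Rabs (G a - G b) >= Rabs (a - b) * sqrt (a * P a * (b * P b))).
  { destruct (Rle_or_lt a b).
    - rewrite (Rabs_minus_sym a b), (Rabs_pos_eq (b - a)) by lra.
      apply (final_le mu j P g h G); auto; lra.
    - rewrite (Rabs_pos_eq (a - b)) by lra. rewrite (Rabs_minus_sym (G a)).
      rewrite Rmult_comm with (r1 := a * P a).
      apply (final_le mu j P g h G); auto; lra. }
  rewrite EG in Key.
  set (L := Rabs (calJ nu a - calJ nu b)) in *.
  set (R0 := Rabs (a - b) * sqrt (a * P a * (b * P b))) in *.
  replace (Rabs (a - b) * (sqrt (a * P a * (b * P b)) * / (2 * mu))) with (R0 / (2 * mu))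
    by (unfold R0; field; lra).
  apply Rle_ge. apply Rge_le in Key.
  apply (Rmult_le_reg_l (2 * mu)). lra.
  replace (2 * mu * (R0 / (2 * mu))) with R0 by (field; lra). lra.
Qed.
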